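(* Let $q>2$ be a prime power and let $M$ be a simple $GF(q)$-representable matroid of rank $r\geq 3$. Suppose that $M\not\cong PG(r-1,q)$ but that $\operatorname{si}(M/e)\cong PG(r-2,q)$ for all $e\in E(M)$. Then $M$ has a member of $\mathcal{N}=\{U_{2,k}:3\leq k\leq q\}\cup\{U_{3,q+2}\}$ as an induced minor.
   Context: $\operatorname{si}$ denotes simplification; every contraction is followed by simplification. An induced minor of $M$ is a matroid obtained from $M$ by a sequence of restrictions to flats and contractions (each followed by simplification). *)

(* Defs.v *)
From HB Require Import structures.
From mathcomp Require Import all_boot all_order all_algebra.
Set Implicit Arguments. Unset Strict Implicit. Unset Printing Implicit Defensive.
Import GRing.Theory.

(* All matroids appearing in the statement are GF(q)-representable (or
   derived from one by restriction/contraction/simplification), hence genuine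
   matroids; the operations below are the standard ones defined via rank. *)
Record matroid (T : finType) := Matroid {
  ground : {set T};
  indep : {set T} -> bool }.

Section Ops.
Variable T : finType.
Implicit Types (M : matroid T) (X Y S F : {set T}) (e f : T).

Definition mrank M X : nat :=
  \max_(Y : {set T} | (Y \subset X) && indep M Y) #|Y|.

Definition loop M e := mrank M [set e] == 0.

Definition parallel M e f :=
  [&& e \in ground M, f \in ground M, ~~ loop M e, ~~ loop M f
    & mrank M [set e; f] == 1].

Definition simple M : Prop :=
  (forall e, e \in ground M -> mrank M [set e] = 1) /\
  (forall e f, e \in ground M -> f \in ground M -> e != f ->
      mrank M [set e; f] = 2).

Definition is_flat M F : Prop :=
  F \subset ground M /\
  forall e, e \in ground M -> e \notin F -> mrank M (e |: F) = (mrank M F).+1.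

Definition restrict M S : matroid T :=
  Matroid (ground M :&: S) (fun Y => (Y \subset ground M :&: S) && indep M Y).

Definition contract M X : matroid T :=
  Matroid (ground M :\: X)
    (fun Y => (Y \subset ground M :\: X) &&
              (mrank M (Y :|: X) == #|Y| + mrank M X)).

Definition is_si M N : Prop :=
  exists S, [/\ S \subset ground M,
    (forall e, e \in S -> ~~ loop M e),
    (forall e f, e \in S -> f \in S -> parallel M e f -> e = f),
    (forall e, e \in ground M -> ~~ loop M e ->
        exists2 f, f \in S & (f == e) || parallel M e f)
    & N = restrict M S].

Inductive induced_minor M : matroid T -> Prop :=
| im_refl : induced_minor M M
| im_restr N F : induced_minor M N -> is_flat N F ->
    induced_minor M (restrict N F)
| im_contr N e N' : induced_minor M N -> e \in ground N ->
    is_si (contract N [set e]) N' -> induced_minor M N'.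

End Ops.

Definition miso (T1 T2 : finType) (M1 : matroid T1) (M2 : matroid T2) : Prop :=
  exists f : T1 -> T2,
    [/\ {in ground M1 &, injective f}, f @: ground M1 = ground M2
      & forall X : {set T1}, X \subset ground M1 -> indep M1 X = indep M2 (f @: X)].

Definition has_induced_minor (T1 T2 : finType) (M : matroid T1)
  (N : matroid T2) : Prop :=
  exists2 M', induced_minor M M' & miso M' N.

Definition prime_power (q : nat) : Prop :=
  exists p k, [/\ prime p, 0 < k & q = p ^ k].

(* GF(q)-representability: elements sent to vectors of F^n, F a field of
   order q; a set is independent iff its vectors are distinct and linearly
   independent *)
Definition representable (q : nat) (T : finType) (M : matroid T) : Prop :=
  exists (F : finFieldType) (n : nat) (v : T -> 'rV[F]_n),
    #|F| = q /\
    forall X : {set T}, indep M X = (X \subset ground M) && free [seq v x | x <- enum X].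

(* The projective geometry PG(n-1, F): points are the 1-dimensional
   subspaces of F^n (given as sets of vectors); independence is linear
   independence of chosen nonzero representatives. *)
Definition pg_point (F : finFieldType) (n : nat) (P : {set 'rV[F]_n}) : bool :=
  [exists v : 'rV[F]_n, (v != 0%R) && (P == [set (c *: v)%R | c : F])].

Definition pg_rep (F : finFieldType) (n : nat) (P : {set 'rV[F]_n}) : 'rV[F]_n :=
  odflt 0%R [pick v in P | v != 0%R].

Definition PGmat (F : finFieldType) (n : nat) : matroid {set 'rV[F]_n} :=
  Matroid [set P | pg_point P]
    (fun X => (X \subset [set P | pg_point P]) &&
              free [seq pg_rep x | x <- enum X]).

Definition isPG (T : finType) (M : matroid T) (k q : nat) : Prop :=
  exists F : finFieldType, #|F| = q /\ miso M (PGmat F k.+1).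

Definition U (a b : nat) : matroid 'I_b :=
  Matroid [set: 'I_b] (fun X => #|X| <= a).

(* Main.v *)
From HB Require Import structures.
Require Import Defs.
From mathcomp Require Import all_boot all_order all_algebra all_field.
From mathcomp Require Import zify.
From Stdlib Require Import Classical.
Set Implicit Arguments. Unset Strict Implicit. Unset Printing Implicit Defensive.
Import GRing.Theory.

Module L1.
Local Open Scope ring_scope.

Section LinAlg.
Variables (F : fieldType) (n : nat).
Local Notation vT := 'rV[F]_n.
Implicit Types (x y z : vT) (U W : {vspace vT}).

Lemma capv_line0 x W : x \notin W -> (<[x]> :&: W = 0)%VS.
Proof.
move=> xW; apply/eqP; rewrite -subv0; apply/subvP => y /memv_capP [/vlineP [k ->] hy].
rewrite memv0; have [->|k0] := eqVneq k 0; first by rewrite scale0r.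
by case/negP: xW; rewrite -(scalerK k0 x) memvZ.
Qed.

Lemma dim_add_line x W : x \notin W -> \dim (<[x]> + W) = (\dim W).+1.
Proof.
move=> xW; have x0 : x != 0 by apply: contraNneq xW => ->; rewrite mem0v.
have := dimv_sum_cap <[x]> W; rewrite capv_line0 // dimv0 addn0 dim_vline x0.
by rewrite add1n.
Qed.

Lemma line_eq x y : y != 0 -> y \in <[x]>%VS -> <[y]>%VS = <[x]>%VS.
Proof.
move=> y0 yx; apply/eqP; rewrite eqEdim -memvE yx /=.
rewrite !dim_vline y0; case: (x == 0) => //.
Qed.

End LinAlg.

Section Rep.
Variables (F : fieldType) (n : nat) (T : finType) (v : T -> 'rV[F]_n)
  (M : matroid T).
Hypothesis Mrep : forall X, indep M X =
  (X \subset ground M) && free [seq v x | x <- enum X].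
Local Notation E := (ground M).

Definition vs (X : {set T}) := <<[seq v x | x <- enum X]>>%VS.

Lemma vs_mem (X : {set T}) x : x \in X -> v x \in vs X.
Proof. by move=> xX; apply: memv_span; apply: map_f; rewrite mem_enum. Qed.

Lemma vs_subP (X : {set T}) (U : {vspace 'rV[F]_n}) : reflect (forall x, x \in X -> v x \in U) (vs X <= U)%VS.
Proof.
apply: (iffP span_subvP) => [h x xX|h y /mapP [x]]; first by apply: h; apply: map_f; rewrite mem_enum.
by rewrite mem_enum => xX ->; apply: h.
Qed.

Lemma vsS (A B : {set T}) : A \subset B -> (vs A <= vs B)%VS.
Proof. by move=> AB; apply/vs_subP => x xA; apply: vs_mem; apply: (subsetP AB). Qed.

Lemma vsU (A B : {set T}) : vs (A :|: B) = (vs A + vs B)%VS.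
Proof.
apply/eqP; rewrite eqEsubv; apply/andP; split.
  apply/vs_subP => x; rewrite inE => /orP [] xX.
    by apply: (subvP (addvSl _ _)); apply: vs_mem.
  by apply: (subvP (addvSr _ _)); apply: vs_mem.
by rewrite subv_add !vsS // ?subsetUl ?subsetUr.
Qed.

Lemma vs1 x : vs [set x] = <[v x]>%VS.
Proof. by rewrite /vs enum_set1 span_seq1. Qed.

Lemma vs0 : vs set0 = 0%VS.
Proof. by rewrite /vs enum_set0 span_nil. Qed.

Lemma indepE (X : {set T}) : indep M X = (X \subset E) && (\dim (vs X) == #|X|).
Proof. by rewrite Mrep /free size_map -cardE. Qed.

Lemma basis_ex (X : {set T}) : exists Y : {set T}, [/\ Y \subset X, \dim (vs Y) = #|Y| & vs Y = vs X].
Proof.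
have [k cX] : exists k, #|X| = k by eexists.
elim: k X cX => [|k IH] X cX.
  by exists X; split => //; move/eqP: cX; rewrite cards_eq0 => /eqP ->; rewrite vs0 dimv0 cards0.
have [x xX] : exists x, x \in X by apply/set0Pn; rewrite -card_gt0 cX.
have cX' : #|X :\ x| = k by move: cX; rewrite (cardsD1 x) xX add1n => -[].
have [Y [YX dY eY]] := IH _ cX'.
have eX : X = [set x] :|: (X :\ x) by rewrite setD1K.
case: (boolP (v x \in vs Y)) => vxY.
  exists Y; split => //; first by apply: (subset_trans YX); apply: subsetDl.
  rewrite eX vsU vs1 -eY; apply/esym/addv_idPr.
  by rewrite -memvE.
exists (x |: Y); split.
- by rewrite subUset sub1set xX (subset_trans YX) ?subsetDl.
- rewrite vsU vs1 dim_add_line // cardsU1 dY.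
  have -> : x \notin Y by apply: contra vxY; apply: vs_mem.
  by rewrite add1n.
- by rewrite eX !vsU eY.
Qed.

Lemma mrankE (X : {set T}) : mrank M X = \dim (vs (X :&: E)).
Proof.
apply/eqP; rewrite eqn_leq; apply/andP; split.
  apply/bigmax_leqP => Y /andP [YX]; rewrite indepE => /andP [YE /eqP <-].
  by apply: dimvS; apply: vsS; rewrite subsetI YX YE.
have [Y [YX dY eY]] := basis_ex (X :&: E).
have -> : \dim (vs (X :&: E)) = #|Y| by rewrite -eY.
rewrite /mrank; apply: (@leq_bigmax_cond _ _ (fun Y : {set T} => #|Y|)).
rewrite (subset_trans YX) ?subsetIl // indepE dY eqxx andbT.
by rewrite (subset_trans YX) ?subsetIr.
Qed.

End Rep.

End L1.
Import L1.

Module L2.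
Local Open Scope ring_scope.

Lemma disjP (U : finType) (A B : {set U}) :
  (forall x, x \in A -> x \in B -> False) -> [disjoint A & B].
Proof.
move=> h; rewrite -setI_eq0; apply/eqP/setP => x; rewrite !inE.
by apply/negbTE/negP => /andP [xA xB]; exact: h xA xB.
Qed.

Lemma card_fam (I U : finType) (J : {set I}) (D : I -> {set U}) k :
  {in J &, forall i j, i != j -> [disjoint D i & D j]} ->
  {in J, forall i, #|D i| = k} ->
  #|\bigcup_(i in J) D i| = (#|J| * k)%N.
Proof.
have [m cJ] : exists m, #|J| = m by eexists.
elim: m J cJ => [|m IH] J cJ dis cD.
  move/eqP: cJ; rewrite cards_eq0 => /eqP ->; rewrite big_set0 cards0 cards0 //.
have [j jJ] : exists j, j \in J by apply/set0Pn; rewrite -card_gt0 cJ.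
have cJ' : #|J :\ j| = m by move: cJ; rewrite (cardsD1 j) jJ add1n => -[].
rewrite (big_setD1 j) //= cardsU.
have -> : D j :&: \bigcup_(i in J :\ j) D i = set0.
  apply/setP => y; rewrite !inE; apply/negbTE/andP => -[yj /bigcupP [i /setD1P [ij iJ] yi]].
  have := dis _ _ jJ iJ; rewrite eq_sym ij => /(_ isT) /disjointFr /(_ yj).
  by rewrite yi.
rewrite cards0 subn0 (IH _ cJ') ?cD ?cJ //.
- by rewrite cJ' mulSn.
- by move=> i i' /setD1P [_ iJ] /setD1P [_ i'J]; apply: dis.
- by move=> i /setD1P [_ iJ]; apply: cD.
Qed.

Section FinVec.
Variables (F : finFieldType) (n : nat).
Local Notation vT := 'rV[F]_n.
Implicit Types (x y z : vT) (U W : {vspace vT}).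

Lemma card_sp U : #|[set y | y \in U]| = (#|F| ^ \dim U)%N.
Proof. by rewrite cardsE card_vspace. Qed.

Lemma card_nz : #|[set y : vT | y != 0]| = (#|F| ^ n - 1)%N.
Proof.
have := cardsC [set (0 : vT)]; rewrite cards1 card_mx mul1n => <-.
rewrite addKn; apply: eq_card => y; rewrite !inE.
by [].
Qed.

Lemma scal_inj x : x != 0 -> injective (fun c : F => c *: x).
Proof.
move=> x0 c d /eqP; rewrite -subr_eq0 -scalerBl scaler_eq0 (negbTE x0) orbF subr_eq0.
by move/eqP.
Qed.

Lemma card_ptset x : x != 0 -> #|[set c *: x | c : F]| = #|F|.
Proof. by move=> x0; rewrite card_imset ?cardsT //; apply: scal_inj. Qed.

Lemma pt_reparam x y : y != 0 -> y \in [set c *: x | c : F] ->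
  [set c *: x | c : F] = [set c *: y | c : F].
Proof.
move=> y0 /imsetP [a _ ya]; have a0 : a != 0 by apply: contraNneq y0 => a0; rewrite ya a0 scale0r.
apply/setP => z; apply/imsetP/imsetP => [[c _ ->]|[c _ ->]].
  by exists (c / a) => //; rewrite ya scalerA mulfVK.
by exists (c * a) => //; rewrite ya scalerA.
Qed.

End FinVec.

Lemma pg_count (F : finFieldType) m :
  ((#|F| - 1) * #|[set P : {set 'rV[F]_m} | pg_point P]|)%N = (#|F| ^ m - 1)%N.
Proof.
set J := [set P : {set 'rV[F]_m} | pg_point P].
rewrite -card_nz mulnC.
have -> : [set y : 'rV[F]_m | y != 0] = \bigcup_(P in J) (P :\ 0).
  apply/setP => y; rewrite [in LHS]inE; apply/idP/idP => [y0|/bigcupP [P PJ] /setD1P [] //].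
  apply/bigcupP; exists [set c *: y | c : F]; last first.
    by rewrite !inE y0; apply/imsetP; exists 1 => //; rewrite scale1r.
  by rewrite inE; apply/existsP; exists y; rewrite y0 eqxx.
symmetry; apply: card_fam.
  move=> P Q; rewrite !inE => /existsP [x /andP [x0 /eqP ->]] /existsP [x' /andP [x'0 /eqP ->]].
  move=> neq; apply: disjP => y /setD1P [y0 yP] /setD1P [_ yQ].
  by case/eqP: neq; rewrite (pt_reparam y0 yP) (pt_reparam y0 yQ).
move=> P; rewrite inE => /existsP [x /andP [x0 /eqP ->]].
rewrite cardsD (card_ptset x0); congr (_ - _)%N.
have -> : [set c *: x | c : F] :&: [set 0] = [set 0 : 'rV[F]_m].
  apply/setP => y; rewrite !inE; apply/andP/eqP => [[_ /eqP] //|->]; split => //.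
  by apply/imsetP; exists 0 => //; rewrite scale0r.
by rewrite cards1.
Qed.

End L2.
Import L2.

Module L3.
Local Open Scope ring_scope.

Lemma sub_eq (K : fieldType) (vT : vectType K) (U W : {vspace vT}) :
  (W <= U)%VS -> (\dim U <= \dim W)%N -> W = U.
Proof. by move=> WU dUW; apply/eqP; rewrite eqEdim WU. Qed.

Lemma mrank_ge (U : finType) (M : matroid U) (Y Z : {set U}) :
  Y \subset Z -> indep M Y -> (#|Y| <= mrank M Z)%N.
Proof.
move=> YZ iY; rewrite /mrank.
by apply: (@leq_bigmax_cond _ _ (fun Y : {set U} => #|Y|)); rewrite YZ iY.
Qed.

Lemma mrank_le (U : finType) (M : matroid U) (Z : {set U}) (k : nat) :
  (forall Y : {set U}, Y \subset Z -> indep M Y -> (#|Y| <= k)%N) -> (mrank M Z <= k)%N.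
Proof. by move=> h; apply/bigmax_leqP => Y /andP [YZ iY]; apply: h. Qed.

Section Simple.
Variables (F : finFieldType) (n : nat) (T : finType) (v : T -> 'rV[F]_n)
  (M : matroid T).
Hypothesis Mrep : forall X, indep M X =
  (X \subset ground M) && free [seq v x | x <- enum X].
Hypothesis Msimple : simple M.
Local Notation E := (ground M).
Local Notation vs := (vs v).
Local Notation mrankE := (mrankE Mrep).

Lemma setIE (X : {set T}) : X \subset E -> X :&: E = X.
Proof. by move/setIidPl. Qed.

Lemma v_nz e : e \in E -> v e != 0.
Proof.
move=> eE; have := Msimple.1 e eE; rewrite mrankE setIE ?sub1set // vs1 dim_vline.
by case: (v e != 0).
Qed.

Lemma v_pair e f : e \in E -> f \in E -> e != f -> v f \notin <[v e]>%VS.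
Proof.
move=> eE fE ef; have := Msimple.2 e f eE fE ef.
rewrite mrankE setIE; last by rewrite subUset !sub1set eE fE.
rewrite vsU !vs1 => /eqP; apply: contraTN => vfe.
have -> : (<[v e]> + <[v f]>)%VS = <[v e]>%VS by apply/addv_idPl; rewrite -memvE.
by rewrite dim_vline (v_nz eE).
Qed.

Lemma pt_inj e f : e \in E -> f \in E -> v f \in <[v e]>%VS -> f = e.
Proof.
move=> eE fE vfe; apply/eqP; rewrite eq_sym; apply: contraTT vfe => ef.
exact: v_pair.
Qed.

Lemma mrank_sub (X : {set T}) : X \subset E -> mrank M X = \dim (vs X).
Proof. by move=> XE; rewrite mrankE setIE. Qed.

Section Contr.
Variables (e : T).
Hypothesis eE : e \in E.

Definition line f := (<[v e]> + <[v f]>)%VS.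

Lemma line2 (L : {vspace 'rV[F]_n}) y : \dim L = 2%N -> v e \in L -> y \in L ->
  y \notin <[v e]>%VS -> L = (<[v e]> + <[y]>)%VS.
Proof.
move=> dL eL yL ye; symmetry; apply: sub_eq.
  by rewrite subv_add -!memvE eL yL.
by rewrite addvC dim_add_line // dim_vline (v_nz eE) dL.
Qed.

Lemma dim_line f : f \in E -> f != e -> \dim (line f) = 2%N.
Proof.
move=> fE fe; rewrite /line addvC dim_add_line ?dim_vline ?(v_nz eE) //.
by apply: v_pair; rewrite // eq_sym.
Qed.

Lemma line_sub f (L : {vspace 'rV[F]_n}) : v e \in L -> v f \in L -> (line f <= L)%VS.
Proof. by move=> eL fL; rewrite subv_add -!memvE eL fL. Qed.

Lemma mem_linef f : v f \in line f.
Proof. by apply: (subvP (addvSr _ _)); rewrite memv_line. Qed.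

Local Notation N0 := (contract M [set e]).

Lemma mrank1 : mrank M [set e] = 1%N.
Proof. exact: Msimple.1. Qed.

Lemma N0_indep (Y : {set T}) : Y \subset E :\ e ->
  indep N0 Y = (\dim (vs Y + <[v e]>) == #|Y|.+1).
Proof.
move=> YE /=; rewrite YE /= mrank_sub ?vsU ?vs1 ?mrank1 ?addn1 //.
by rewrite subUset sub1set eE (subset_trans YE) ?subsetDl.
Qed.

Lemma N0_nonloop f : f \in E :\ e -> ~~ loop N0 f.
Proof.
move=> fE; rewrite /loop -lt0n; apply: (@leq_trans #|[set f]|); first by rewrite cards1.
apply: mrank_ge => //; rewrite N0_indep ?sub1set // vs1 cards1 addvC.
by move: fE; rewrite !inE => /andP [fe fE]; rewrite dim_line.
Qed.

Lemma ve_line f : v e \in line f.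
Proof. by apply: (subvP (addvSl _ _)); rewrite memv_line. Qed.

Definition rep f := odflt f [pick g | (g \in E :\ e) && (v g \in line f)].

Lemma rep_spec f : f \in E :\ e -> (rep f \in E :\ e) && (v (rep f) \in line f).
Proof. by move=> fE; rewrite /rep; case: pickP => [g //|/(_ f)]; rewrite fE mem_linef. Qed.

Lemma dim_line' f : f \in E :\ e -> \dim (line f) = 2%N.
Proof. by rewrite !inE => /andP [fe fE]; rewrite dim_line. Qed.

Lemma line_eq f g : f \in E :\ e -> g \in E :\ e -> v g \in line f -> line g = line f.
Proof.
move=> fE gE gf; apply: sub_eq; first by apply: line_sub; rewrite ?ve_line.
by rewrite !dim_line'.
Qed.

Lemma line_rep f : f \in E :\ e -> line (rep f) = line f.
Proof. by move=> fE; case/andP: (rep_spec fE) => rE rf; apply: line_eq. Qed.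

Lemma rep_eq f g : f \in E :\ e -> g \in E :\ e -> line f = line g -> rep f = rep g.
Proof.
move=> fE gE fg; rewrite /rep fg; case: pickP => [//|/(_ g)].
by rewrite gE mem_linef.
Qed.

Definition Srep := [set f in E :\ e | rep f == f].

Lemma rep_S f : f \in E :\ e -> rep f \in Srep.
Proof.
move=> fE; case/andP: (rep_spec fE) => rE _.
by rewrite inE rE /=; apply/eqP; apply: rep_eq => //; rewrite line_rep.
Qed.

Lemma S_sub : Srep \subset E :\ e.
Proof. by apply/subsetP => f; rewrite inE => /andP []. Qed.

Lemma S_sep f g : f \in Srep -> g \in Srep -> f != g -> v g \notin line f.
Proof.
move=> fS gS; apply: contraNN => gf.
have fE := subsetP S_sub _ fS; have gE := subsetP S_sub _ gS.
move: fS gS; rewrite !inE => /andP [_ /eqP <-] /andP [_ /eqP <-].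
by apply/eqP; apply: rep_eq => //; rewrite (line_eq fE gE gf).
Qed.

Lemma si_ex : is_si N0 (restrict N0 Srep).
Proof.
exists Srep; split => //.
- exact: S_sub.
- by move=> f fS; apply: N0_nonloop; apply: (subsetP S_sub).
- move=> f g fS gS /and5P [_ _ _ _ /eqP r1]; apply/eqP; apply: contraT => fg.
  have fE := subsetP S_sub _ fS; have gE := subsetP S_sub _ gS.
  have : (#|[set f; g]| <= mrank N0 [set f; g])%N.
    apply: mrank_ge => //; rewrite N0_indep; last by rewrite subUset !sub1set fE gE.
    rewrite cards2 fg vsU !vs1.
    have -> : (<[v f]> + <[v g]> + <[v e]> = <[v g]> + line f)%VS.
      by rewrite /line addvC addvA [(<[v e]> + _)%VS]addvC addvC.
    by rewrite dim_add_line ?dim_line' ?S_sep.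
  by rewrite r1 cards2 fg.
- move=> f fE _; exists (rep f); first exact: rep_S.
  case: eqP => [-> //|/eqP rf] /=; rewrite eq_sym in rf.
  have rE : rep f \in E :\ e by case/andP: (rep_spec fE).
  rewrite /parallel /= fE rE !N0_nonloop //=.
  rewrite eqn_leq; apply/andP; split.
    apply: mrank_le => Y YS; rewrite N0_indep; last first.
      by apply: (subset_trans YS); rewrite subUset !sub1set fE rE.
    move=> /eqP dY; rewrite -ltnS -dY -(dim_line' fE); apply: dimvS.
    rewrite subv_add -memvE ve_line andbT; apply/vs_subP => x /(subsetP YS).
    by rewrite !inE => /orP [] /eqP ->; rewrite ?mem_linef //; case/andP: (rep_spec fE).
  apply: (@leq_trans #|[set f]|); first by rewrite cards1.
  apply: mrank_ge; first by rewrite sub1set !inE eqxx.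
  rewrite N0_indep ?sub1set // vs1 cards1 addvC.
  by rewrite dim_line'.
Qed.

End Contr.
End Simple.

End L3.
Import L3.

Module L4.
Local Open Scope ring_scope.

Section H.
Variables (F : finFieldType) (n : nat) (T : finType) (v : T -> 'rV[F]_n)
  (M : matroid T).
Hypothesis Mrep : forall X, indep M X =
  (X \subset ground M) && free [seq v x | x <- enum X].
Hypothesis Msimple : simple M.
Local Notation E := (ground M).
Local Notation vs := (vs v).

Lemma card_diff (A B : {vspace 'rV[F]_n}) : (B <= A)%VS ->
  #|[set y | y \in A] :\: [set y | y \in B]| = (#|F| ^ \dim A - #|F| ^ \dim B)%N.
Proof.
move=> BA; rewrite cardsD !card_sp; congr (_ - _)%N.
rewrite -card_sp; apply: eq_card => y; rewrite !inE.
by case yB: (y \in B); rewrite ?andbF ?andbT // (subvP BA).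
Qed.

Lemma H_line (q r : nat) (e : T) : e \in E -> #|F| = q -> \dim (vs E) = r ->
  (2 < r)%N ->
  (forall N, is_si (contract M [set e]) N -> isPG N (r - 2) q) ->
  forall L : {vspace 'rV[F]_n}, (L <= vs E)%VS -> \dim L = 2%N -> v e \in L ->
  exists2 f, f \in E & (f != e) && (v f \in L).
Proof.
move=> eE cF dE r2 hyp L LE dL eL.
have [F' [cF' [phi [phi_inj phi_im _]]]] := hyp _ (si_ex Mrep Msimple eE).
set S := Srep v M e in phi_inj phi_im.
have gN : ground (restrict (contract M [set e]) S) = S.
  by apply/setIidPr; apply: S_sub.
rewrite gN in phi_inj phi_im.
have cS : #|S| = #|[set P : {set 'rV[F']_(r - 2).+1} | pg_point P]|.
  by have := card_in_imset phi_inj; rewrite phi_im => <-.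
have pc := pg_count F' (r - 2).+1; rewrite -cS cF' in pc.
have er : r = (r - 2).+2 by rewrite -addn2 subnK // ltnW.
set D := fun f => [set y | y \in line v e f] :\: [set y | y \in <[v e]>%VS].
set Z := [set y | y \in vs E] :\: [set y | y \in <[v e]>%VS].
have cZ : #|Z| = (q ^ r - q)%N.
  rewrite card_diff ?dim_vline ?(v_nz Mrep Msimple eE) ?cF ?dE ?expn1 //.
  by rewrite -memvE (subvP LE).
have UZ : \bigcup_(f in S) D f = Z.
  apply/eqP; rewrite eqEcard; apply/andP; split.
    apply/subsetP => y /bigcupP [f fS]; rewrite !inE => /andP [ye yf]; rewrite ye /=.
    have fE : f \in E by move: (subsetP (S_sub v M e) _ fS); rewrite inE => /andP [].
    move: yf; apply: subvP; apply: line_sub; first by rewrite (subvP LE).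
    by apply: vs_mem.
  rewrite cZ (card_fam (k := (q ^ 2 - q)%N)).
  - have -> : (q ^ 2 - q = (q - 1) * q)%N.
      by rewrite mulnBl mul1n.
    rewrite mulnA [(#|S| * _)%N]mulnC pc mulnBl mul1n -expnSr.
    by rewrite -er.
  - move=> f g fS gS fg; apply: disjP => y; rewrite !inE => /andP [ye yf] /andP [_ yg].
    have fE := subsetP (S_sub v M e) _ fS; have gE := subsetP (S_sub v M e) _ gS.
    have := line2 Mrep Msimple eE (dim_line' Mrep Msimple eE fE) (ve_line v e f) yf ye.
    have := line2 Mrep Msimple eE (dim_line' Mrep Msimple eE gE) (ve_line v e g) yg ye.
    move=> h1 h2; move: (S_sep Mrep Msimple eE fS gS fg); rewrite h2 -h1.
    by rewrite mem_linef.
  - move=> f fS; have fE := subsetP (S_sub v M e) _ fS.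
    rewrite /D card_diff; last by rewrite -memvE ve_line.
    by rewrite (dim_line' Mrep Msimple eE fE) dim_vline (v_nz Mrep Msimple eE) cF expn1.
case: (pickP [pred y | (y \in L) && (y \notin <[v e]>%VS)]) => [y /andP [yL ye]|none].
  have : y \in Z by rewrite !inE ye (subvP LE).
  rewrite -UZ => /bigcupP [f fS]; rewrite !inE => /andP [_ yf].
  have fE := subsetP (S_sub v M e) _ fS.
  have := line2 Mrep Msimple eE (dim_line' Mrep Msimple eE fE) (ve_line v e f) yf ye.
  have := line2 Mrep Msimple eE dL eL yL ye.
  move=> h1 h2; exists f; first by move: fE; rewrite inE => /andP [].
  move: fE; rewrite !inE => /andP [-> _] /=.
  by rewrite h1 -h2 mem_linef.
have : (L <= <[v e]>)%VS.
  by apply/subvP => y yL; move: (none y) => /=; rewrite yL /= => /negbFE.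
move/dimvS; rewrite dL dim_vline (v_nz Mrep Msimple eE) //.
Qed.

End H.

End L4.
Import L4.

Module L5.
Local Open Scope ring_scope.

Lemma pg_rep_spec (F : finFieldType) m (P : {set 'rV[F]_m}) : pg_point P ->
  pg_rep P != 0 /\ P = [set c *: pg_rep P | c : F].
Proof.
case/existsP => x /andP [x0 /eqP ->]; rewrite /pg_rep.
case: pickP => [y /andP [yP y0]|/(_ x)] /=.
  by split => //; apply: pt_reparam.
by rewrite x0 andbT => /negbT/negP; case; apply/imsetP; exists 1; rewrite ?scale1r.
Qed.

Section PGiso.
Variables (F : finFieldType) (n : nat) (T : finType) (v : T -> 'rV[F]_n)
  (M : matroid T).
Hypothesis Mrep : forall X, indep M X =
  (X \subset ground M) && free [seq v x | x <- enum X].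
Hypothesis Msimple : simple M.
Local Notation E := (ground M).
Local Notation vs := (vs v).
Local Notation V := (vs E).
Local Notation d := (\dim V).
Local Notation B := (vbasis V).

Definition phi (x : 'rV[F]_n) : 'rV[F]_d := \row_i coord B i x.

Lemma phi_linear : linear phi.
Proof. by move=> a x y; apply/rowP => i; rewrite !mxE linearP. Qed.
HB.instance Definition _ := GRing.isSemilinear.Build F _ _ _ phi
  (GRing.semilinear_linear phi_linear).

Lemma phiK x : x \in V -> \sum_i phi x 0 i *: B`_i = x.
Proof.
by move=> xV; rewrite [in RHS](coord_vbasis xV); apply: eq_bigr => i _; rewrite mxE.
Qed.

Lemma phi0 x : x \in V -> phi x = 0 -> x = 0.
Proof.
move=> xV px; rewrite -(phiK xV) px; apply: big1 => i _.
by rewrite mxE scale0r.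
Qed.

Lemma phi_surj (w : 'rV[F]_d) : exists2 x, x \in V & phi x = w.
Proof.
exists (\sum_i w 0 i *: B`_i).
  by apply: rpred_sum => i _; apply: rpredZ; apply: vbasis_mem; apply: mem_nth; rewrite size_tuple.
apply/rowP => j; rewrite mxE coord_sum_free //.
exact: (basis_free (vbasisP V)).
Qed.

Lemma dim_phi (s : seq 'rV[F]_n) : {subset s <= V} ->
  \dim <<map phi s>> = \dim <<s>>.
Proof.
move=> sV.
have -> : map phi s = map (linfun phi) s by apply: eq_map => x; rewrite lfunE.
rewrite -limg_span limg_dim_eq //; apply/eqP; rewrite -subv0; apply/subvP => x.
rewrite memv_cap memv_ker lfunE /= => /andP [xs /eqP px]; rewrite memv0.
apply/eqP; apply: phi0 px; move: xs; apply: subvP; exact/span_subvP.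
Qed.

Hypothesis full : forall x, x \in V -> x != 0 -> exists2 g, g \in E & x \in <[v g]>%VS.

Definition fmap g := [set c *: phi (v g) | c : F].

Lemma phi_vg_nz g : g \in E -> phi (v g) != 0.
Proof.
move=> gE; apply/eqP => h; have := phi0 (vs_mem v gE) h.
by apply/eqP; apply: (v_nz Mrep Msimple gE).
Qed.

Lemma fmap_point g : g \in E -> pg_point (fmap g).
Proof. by move=> gE; apply/existsP; exists (phi (v g)); rewrite phi_vg_nz //=. Qed.

Lemma fmap_inj : {in E &, injective fmap}.
Proof.
move=> g h gE hE eq; have : phi (v g) \in fmap h.
  by rewrite -eq; apply/imsetP; exists 1; rewrite ?scale1r.
case/imsetP => c _ pc; apply: (pt_inj Mrep Msimple hE gE).
have : v g - c *: v h = 0.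
  apply: phi0; first by rewrite rpredB ?rpredZ ?vs_mem.
  by rewrite linearB linearZ /= pc subrr.
by move/eqP; rewrite subr_eq0 => /eqP ->; rewrite memvZ ?memv_line.
Qed.

Lemma fmap_im : fmap @: E = ground (PGmat F d).
Proof.
apply/setP => P; rewrite inE; apply/imsetP/idP => [[g gE ->]|Pp].
  exact: fmap_point.
have [w0 eP] := pg_rep_spec Pp; set w := pg_rep P in w0 eP.
have [x xV px] := phi_surj w.
have x0 : x != 0 by apply: contraNneq w0 => x0; rewrite -px x0 linear0.
have [g gE /vlineP [a xa]] := full xV x0.
exists g => //; rewrite eP /fmap; symmetry; apply: pt_reparam => //.
by apply/imsetP; exists a => //; rewrite -px xa linearZ.
Qed.

Lemma fmap_indep (X : {set T}) : X \subset E -> indep M X = indep (PGmat F d) (fmap @: X).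
Proof.
move=> XE; rewrite (indepE Mrep) XE /=.
have -> : (fmap @: X \subset [set P | pg_point P]).
  by apply/subsetP => P /imsetP [g gX ->]; rewrite inE fmap_point // (subsetP XE).
rewrite /= /free size_map -cardE card_in_imset; last first.
  by move=> g h gX hX; apply: fmap_inj; apply: (subsetP XE).
have -> : <<[seq pg_rep y | y <- enum (fmap @: X)%SET]>>%VS =
          <<[seq phi x | x <- [seq v x | x <- enum X]]>>%VS.
  apply/eqP; rewrite eqEsubv; apply/andP; split; apply/span_subvP => z /mapP [y].
    rewrite mem_enum => /imsetP [g gX ->] ->.
    have [_ eP] := pg_rep_spec (fmap_point (subsetP XE _ gX)).
    have : pg_rep (fmap g) \in fmap g.
      by rewrite {2}eP; apply/imsetP; exists 1; rewrite ?scale1r.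
    case/imsetP => c _ ->; apply: rpredZ; apply: memv_span.
    by apply: map_f; apply: map_f; rewrite mem_enum.
  case/mapP => g; rewrite mem_enum => gX -> ->.
  have [_ eP] := pg_rep_spec (fmap_point (subsetP XE _ gX)).
  have : phi (v g) \in fmap g by apply/imsetP; exists 1; rewrite ?scale1r.
  rewrite {1}eP => /imsetP [c _ ->]; apply: rpredZ; apply: memv_span.
  by apply: map_f; rewrite mem_enum imset_f.
rewrite dim_phi //; move=> y /mapP [g]; rewrite mem_enum => gX ->.
by apply: vs_mem; apply: (subsetP XE).
Qed.

Lemma full_miso : miso M (PGmat F d).
Proof. by exists fmap; split; [exact: fmap_inj | exact: fmap_im | exact: fmap_indep]. Qed.

End PGiso.

End L5.
Import L5.

Module L6.
Local Open Scope ring_scope.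

Section LA.
Variables (F : finFieldType) (n : nat).
Implicit Types (x y : 'rV[F]_n) (L W U : {vspace 'rV[F]_n}).

Lemma exists_out U W : (\dim W < \dim U)%N -> exists2 y, y \in U & y \notin W.
Proof.
move=> dWU; case: (pickP [pred y | (y \in U) && (y \notin W)]) => [y /andP [] |none].
  by exists y.
have : (U <= W)%VS by apply/subvP => y yU; move: (none y) => /=; rewrite yU /= => /negbFE.
by move/dimvS; rewrite leqNgt dWU.
Qed.

Lemma exists_nz U : (0 < \dim U)%N -> exists2 y, y \in U & y != 0.
Proof.
move=> dU; have [|y yU y0] := @exists_out U 0%VS; first by rewrite dimv0.
by exists y; rewrite // -memv0.
Qed.

Lemma span2 L x y : \dim L = 2%N -> x \in L -> y \in L -> x != 0 ->
  y \notin <[x]>%VS -> L = (<[x]> + <[y]>)%VS.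
Proof.
move=> dL xL yL x0 yx; symmetry; apply: sub_eq; first by rewrite subv_add -!memvE xL yL.
by rewrite addvC dim_add_line // dim_vline x0 dL.
Qed.

Lemma meet U L W : \dim U = 3%N -> (L <= U)%VS -> (W <= U)%VS ->
  \dim L = 2%N -> \dim W = 2%N -> exists y, [/\ y \in L, y \in W & y != 0].
Proof.
move=> dU LU WU dL dW.
have := dimv_sum_cap L W; rewrite dL dW.
have : (\dim (L + W) <= 3)%N by rewrite -dU dimvS // subv_add LU WU.
move=> h1 h2; have : (0 < \dim (L :&: W))%N.
  by rewrite lt0n; apply/eqP => h; move: h2; rewrite h addn0 => h3; rewrite h3 in h1.
case/exists_nz => y; rewrite memv_cap => /andP [yL yW] y0; by exists y.
Qed.

End LA.

Lemma disj_card_le (I U : finType) (J : {set I}) (D : I -> {set U}) k (Z : {set U}) :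
  {in J &, forall i j, i != j -> [disjoint D i & D j]} ->
  {in J, forall i, #|D i| = k} -> (forall i, i \in J -> D i \subset Z) ->
  (#|J| * k <= #|Z|)%N.
Proof.
move=> dis cD DZ; rewrite -(card_fam dis cD); apply: subset_leq_card.
by apply/subsetP => y /bigcupP [i iJ yi]; apply: (subsetP (DZ i iJ)).
Qed.

Section Minors.
Variables (F : finFieldType) (n : nat) (T : finType) (v : T -> 'rV[F]_n)
  (M : matroid T).
Hypothesis Mrep : forall X, indep M X =
  (X \subset ground M) && free [seq v x | x <- enum X].
Hypothesis Msimple : simple M.
Local Notation E := (ground M).
Local Notation vs := (vs v).

Definition pts (L : {vspace 'rV[F]_n}) := [set g in E | v g \in L].

Lemma pts_sub L : pts L \subset E.
Proof. by apply/subsetP => g; rewrite inE => /andP []. Qed.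

Lemma vs_pts L : (vs (pts L) <= L)%VS.
Proof. by apply/vs_subP => g; rewrite inE => /andP []. Qed.

Lemma flat_pts L : is_flat M (pts L).
Proof.
split; first exact: pts_sub.
move=> e eE eL; rewrite !(mrank_sub Mrep) ?pts_sub //; last by rewrite subUset sub1set eE pts_sub.
rewrite vsU vs1 dim_add_line //; apply: contra eL => h.
by rewrite inE eE (subvP (vs_pts L)).
Qed.

Lemma uniform_miso (Fl : {set T}) (a : nat) x0 : x0 \in Fl -> Fl \subset E ->
  (forall X : {set T}, X \subset Fl -> indep M X = (#|X| <= a)%N) ->
  miso (restrict M Fl) (U a #|Fl|).
Proof.
move=> x0F FE hX; have gr : ground (restrict M Fl) = Fl by apply/setIidPr.
have inj : {in Fl &, injective (enum_rank_in x0F)}.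
  by move=> x y xF yF h; rewrite -(enum_rankK_in x0F xF) -(enum_rankK_in x0F yF) h.
exists (enum_rank_in x0F); rewrite gr; split => //.
  apply/eqP; rewrite eqEcard subsetT /= card_in_imset // cardsT card_ord //.
move=> X XF /=; rewrite (setIidPr FE) XF /= hX // card_in_imset //.
by move=> x y xX yX; apply: inj; apply: (subsetP XF).
Qed.

Lemma minor_restr (U' : finType) (Fl : {set T}) (N : matroid U') :
  is_flat M Fl -> miso (restrict M Fl) N -> has_induced_minor M N.
Proof. by move=> fl iso; exists (restrict M Fl) => //; apply: im_restr => //; apply: im_refl. Qed.

Lemma indep_le2 (X : {set T}) : X \subset E -> (#|X| <= 2)%N -> indep M X.
Proof.
move=> XE cX; rewrite (indepE Mrep) XE /=.
move: cX; rewrite leq_eqVlt ltnS leq_eqVlt ltnS leqn0 => /or3P [c2|c1|c0].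
- case/cards2P: c2 => [x [y [xy eX]]]; rewrite eX; rewrite vsU !vs1 cards2 xy.
  have := Msimple.2 x y; rewrite (mrank_sub Mrep) ?vsU ?vs1.
  + by move=> -> //; rewrite ?(subsetP XE) // eX !inE eqxx ?orbT.
  + by rewrite -eX.
- case/cards1P: c1 => x eX; rewrite eX vs1 dim_vline cards1 (v_nz Mrep Msimple) //.
  by rewrite (subsetP XE) // eX inE.
- by move: c0; rewrite cards_eq0 => /eqP ->; rewrite vs0 dimv0 cards0.
Qed.

End Minors.

End L6.
Import L6.

Module L7.
Local Open Scope ring_scope.

Section Geom.
Variables (F : finFieldType) (n : nat) (T : finType) (v : T -> 'rV[F]_n)
  (M : matroid T).
Hypothesis Mrep : forall X, indep M X =
  (X \subset ground M) && free [seq v x | x <- enum X].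
Hypothesis Msimple : simple M.
Local Notation E := (ground M).
Local Notation vs := (vs v).
Local Notation V := (vs E).
Local Notation pts := (pts v M).
Implicit Types (L U W : {vspace 'rV[F]_n}).

Definition full L := forall y, y \in L -> y != 0 -> exists2 g, g \in E & y \in <[v g]>%VS.

Variable w : 'rV[F]_n.
Hypothesis wV : w \in V.
Hypothesis w0 : w != 0.
Hypothesis wmiss : forall g, g \in E -> w \notin <[v g]>%VS.
Hypothesis H : forall g L, g \in E -> (L <= V)%VS -> \dim L = 2%N -> v g \in L ->
  exists2 h, h \in E & (h != g) && (v h \in L).
Hypothesis NG : forall L, (L <= V)%VS -> \dim L = 2%N -> (3 <= #|pts L|)%N -> full L.
Hypothesis q3 : (2 < #|F|)%N.

Local Notation vnz := (v_nz Mrep Msimple).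
Local Notation vpair := (v_pair Mrep Msimple).
Local Notation ptinj := (pt_inj Mrep Msimple).

Lemma neqS (X : eqType) (x y : X) : x != y -> y != x.
Proof. by rewrite eq_sym. Qed.

Lemma in_line x y W : x \in <[y]>%VS -> y \in W -> x \in W.
Proof. by move=> xy yW; apply: (subvP _ _ xy); rewrite -memvE. Qed.

Lemma three_pts L g1 g2 g3 : g1 \in E -> g2 \in E -> g3 \in E ->
  g1 != g2 -> g1 != g3 -> g2 != g3 ->
  v g1 \in L -> v g2 \in L -> v g3 \in L -> (3 <= #|pts L|)%N.
Proof.
move=> e1 e2 e3 d12 d13 d23 l1 l2 l3.
have : g1 |: (g2 |: [set g3]) \subset pts L by rewrite !subUset !sub1set !inE e1 e2 e3 l1 l2 l3.
move/subset_leq_card => h; apply: leq_trans h.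
rewrite !cardsU1 cards1 !inE negb_or d12 d13 d23.
by [].
Qed.

Lemma full_pt L y : full L -> y \in L -> y != 0 -> exists2 g, g \in E & v g \in <[y]>%VS.
Proof.
move=> fL yL y0; have [g gE yg] := fL y yL y0; exists g => //.
by rewrite (L1.line_eq y0 yg) memv_line.
Qed.

Lemma full_nw L : full L -> w \notin L.
Proof. by move=> fL; apply/negP => wL; have [g gE wg] := fL w wL w0; move: (wmiss gE); rewrite wg. Qed.

Lemma no3w L g1 g2 g3 : (L <= V)%VS -> \dim L = 2%N -> w \in L ->
  g1 \in E -> g2 \in E -> g3 \in E -> g1 != g2 -> g1 != g3 -> g2 != g3 ->
  v g1 \in L -> v g2 \in L -> v g3 \in L -> False.
Proof.
move=> LV dL wL e1 e2 e3 d12 d13 d23 l1 l2 l3.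
have := full_nw (NG LV dL (three_pts e1 e2 e3 d12 d13 d23 l1 l2 l3)).
by rewrite wL.
Qed.

Lemma two_pts_eq L L' g h : \dim L = 2%N -> \dim L' = 2%N -> g \in E -> h \in E -> g != h ->
  v g \in L -> v h \in L -> v g \in L' -> v h \in L' -> L = L'.
Proof.
move=> dL dL' gE hE gh gL hL gL' hL'.
rewrite (span2 dL gL hL (vnz gE) (vpair gE hE gh)).
by rewrite (span2 dL' gL' hL' (vnz gE) (vpair gE hE gh)).
Qed.

Lemma eq_by2 L L' x y : \dim L = 2%N -> \dim L' = 2%N -> x != 0 -> y \notin <[x]>%VS ->
  x \in L -> y \in L -> x \in L' -> y \in L' -> L = L'.
Proof.
move=> dL dL' x0 yx xL yL xL' yL'.
by rewrite (span2 dL xL yL x0 yx) (span2 dL' xL' yL' x0 yx).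
Qed.

Lemma vg_nw g : g \in E -> v g \notin <[w]>%VS.
Proof.
move=> gE; apply/negP => gw; move: (wmiss gE).
by rewrite (L1.line_eq (vnz gE) gw) memv_line.
Qed.

Definition Lw g := (<[w]> + <[v g]>)%VS.

Lemma dim_Lw g : g \in E -> \dim (Lw g) = 2%N.
Proof. by move=> gE; rewrite /Lw addvC dim_add_line ?vg_nw // dim_vline w0. Qed.

Lemma w_Lw g : w \in Lw g.
Proof. by apply: (subvP (addvSl _ _)); rewrite memv_line. Qed.

Lemma g_Lw g : v g \in Lw g.
Proof. by apply: (subvP (addvSr _ _)); rewrite memv_line. Qed.

Lemma Lw_sub g W : w \in W -> v g \in W -> (Lw g <= W)%VS.
Proof. by move=> wW gW; rewrite subv_add -!memvE wW gW. Qed.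

Lemma sigma g : g \in E -> exists2 h, h \in E & (h != g) && (v h \in Lw g).
Proof.
move=> gE; apply: H => //; last exact: g_Lw.
  by apply: Lw_sub => //; apply: vs_mem.
exact: dim_Lw.
Qed.

Lemma line_in_U x y U : x \in U -> y \in U -> (<[x]> + <[y]> <= U)%VS.
Proof. by move=> xU yU; rewrite subv_add -!memvE xU yU. Qed.

Lemma dim_pair g h : g \in E -> h \in E -> g != h -> \dim (<[v g]> + <[v h]>) = 2%N.
Proof.
move=> gE hE gh; rewrite addvC dim_add_line ?dim_vline ?vnz //.
by apply: vpair.
Qed.

Variable U : {vspace 'rV[F]_n}.
Hypothesis UV : (U <= V)%VS.
Hypothesis dU : \dim U = 3%N.
Hypothesis wU : w \in U.

Lemma no_full L : (L <= U)%VS -> \dim L = 2%N -> full L -> False.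
Proof.
move=> LU dL fL.
have LV : (L <= V)%VS := subv_trans LU UV.
have wL := full_nw fL.
have hd1 : (0 < \dim L)%N by rewrite dL.
have [y1 y1L y10] := exists_nz hd1.
have [z1 z1E z1y] := full_pt fL y1L y10.
have z1L := in_line z1y y1L.
have hd : (\dim <[v z1]> < \dim L)%N by rewrite dim_vline vnz // dL.
have [y2 y2L y2n] := exists_out hd.
have y20 : y2 != 0 by apply: contraNneq y2n => ->; rewrite mem0v.
have [z2 z2E z2y] := full_pt fL y2L y20.
have z2L := in_line z2y y2L.
have z12 : z1 != z2.
  apply: contraNneq y2n => ez; rewrite ez.
  by rewrite (L1.line_eq (vnz z2E) z2y) memv_line.
have nLw g : g \in E -> v g \in L -> forall t, t \in E -> t != g -> v t \in Lw g -> v t \notin L.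
  move=> gE gL t tE tg tLw; apply/negP => tL.
  have := two_pts_eq (dim_Lw gE) dL gE tE (neqS tg) (g_Lw g) tLw gL tL.
  by move=> eLw; move: wL; rewrite -eLw w_Lw.
have LwU g : v g \in U -> (Lw g <= U)%VS by move=> gU; apply: Lw_sub.
have UL := subvP LU.
have [t1 t1E /andP [t1z1 t1Lw]] := sigma z1E.
have [t2 t2E /andP [t2z2 t2Lw]] := sigma z2E.
have t1L := nLw _ z1E z1L _ t1E t1z1 t1Lw.
have t2L := nLw _ z2E z2L _ t2E t2z2 t2Lw.
have t1U : v t1 \in U := subvP (LwU _ (UL _ z1L)) _ t1Lw.
have t2U : v t2 \in U := subvP (LwU _ (UL _ z2L)) _ t2Lw.
have t12 : t1 != t2.
  apply/negP => /eqP et; rewrite -et in t2Lw.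
  have e1 := eq_by2 (dim_Lw z1E) (dim_Lw z2E) w0 (vg_nw t1E) (w_Lw z1) t1Lw (w_Lw z2) t2Lw.
  have z2Lw : v z2 \in Lw z1 by rewrite e1 g_Lw.
  have := two_pts_eq dL (dim_Lw z1E) z1E z2E z12 z1L z2L (g_Lw z1) z2Lw.
  by move=> eL; move: wL; rewrite eL w_Lw.
set m := (<[v t1]> + <[v t2]>)%VS.
have dm : \dim m = 2%N by apply: dim_pair.
have mU : (m <= U)%VS by apply: line_in_U.
have t1m : v t1 \in m by apply: (subvP (addvSl _ _)); rewrite memv_line.
have t2m : v t2 \in m by apply: (subvP (addvSr _ _)); rewrite memv_line.
have [y3 [y3L y3m y30]] := meet dU LU mU dL dm.
have [z3 z3E z3y] := full_pt fL y3L y30.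
have z3L := in_line z3y y3L; have z3m := in_line z3y y3m.
have z3t1 : z3 != t1 by apply: contraNneq t1L => <-.
have z3t2 : z3 != t2 by apply: contraNneq t2L => <-.
have mV : (m <= V)%VS := subv_trans mU UV.
have fm : full m := NG mV dm (three_pts t1E t2E z3E t12 (neqS z3t1) (neqS z3t2) t1m t2m z3m).
have wm := full_nw fm.
have [p pE /andP [pz3 pLw]] := sigma z3E.
have nLw' g W : \dim W = 2%N -> w \notin W -> g \in E -> v g \in W -> forall t, t \in E -> t != g -> v t \in Lw g -> v t \notin W.
  move=> dW wW gE gW t tE tg tLw; apply/negP => tW.
  have := two_pts_eq (dim_Lw gE) dW gE tE (neqS tg) (g_Lw g) tLw gW tW.
  by move=> eLw; move: wW; rewrite -eLw w_Lw.
have pm := nLw' _ _ dm wm z3E z3m _ pE pz3 pLw.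
have pL := nLw' _ _ dL wL z3E z3L _ pE pz3 pLw.
have pU : v p \in U := subvP (LwU _ (UL _ z3L)) _ pLw.
have t1p : t1 != p by apply: contraNneq pm => <-.
set n' := (<[v t1]> + <[v p]>)%VS.
have dn : \dim n' = 2%N by apply: dim_pair.
have nU : (n' <= U)%VS by apply: line_in_U.
have t1n : v t1 \in n' by apply: (subvP (addvSl _ _)); rewrite memv_line.
have pn : v p \in n' by apply: (subvP (addvSr _ _)); rewrite memv_line.
have [y4 [y4n y4L y40]] := meet dU nU LU dn dL.
have [z4 z4E z4y] := full_pt fL y4L y40.
have z4L := in_line z4y y4L; have z4n := in_line z4y y4n.
have z4t1 : z4 != t1 by apply: contraNneq t1L => <-.
have z4p : z4 != p by apply: contraNneq pL => <-.
have nV : (n' <= V)%VS := subv_trans nU UV.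
have fn : full n' := NG nV dn (three_pts t1E pE z4E t1p (neqS z4t1) (neqS z4p) t1n pn z4n).
have [c [c0 ycz]] : exists c : F, c != 0 /\ v t1 + c *: v p \notin <[v z4]>%VS.
  have [c2 c2n] : exists c2 : F, c2 \notin [set 0; 1].
    case: (pickP [pred c : F | c \notin [set 0; 1]]) => [c2 h|none]; first by exists c2.
    have : (#|F| <= #|[set (0%R : F); (1%R : F)]|)%N.
      rewrite -cardsT; apply: subset_leq_card; apply/subsetP => c _.
      by move: (none c) => /= /negbFE.
    by rewrite cards2 leqNgt => /negP; case; apply: (leq_ltn_trans _ q3); case: (_ != _).
  move: c2n; rewrite !inE negb_or => /andP [c20 c21].
  case h1 : (v t1 + 1 *: v p \in <[v z4]>%VS); last by exists 1; rewrite oner_neq0 h1.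
  case h2 : (v t1 + c2 *: v p \in <[v z4]>%VS); last by exists c2; rewrite c20 h2.
  have : (1 - c2) *: v p \in <[v z4]>%VS.
    by rewrite scalerBl (_ : 1 *: v p - c2 *: v p = (v t1 + 1 *: v p) - (v t1 + c2 *: v p)) ?rpredB // opprD addrACA subrr add0r.
  move=> h; exfalso; have : v p \in <[v z4]>%VS.
    have nz : 1 - c2 != 0 by rewrite subr_eq0 eq_sym.
    by have := memvZ ((1 - c2)^-1) h; rewrite scalerA mulVf // scale1r.
  by move/(ptinj z4E pE) => ep; move: z4p; rewrite ep eqxx.
have [y ey] : exists y, y = v t1 + c *: v p by eexists.
rewrite -ey in ycz.
have yn : y \in n' by rewrite ey rpredD ?rpredZ.
have y0 : y != 0 by apply: contraNneq ycz => ->; rewrite mem0v.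
have [s sE sy] := full_pt fn yn y0.
have ys : y \in <[v s]>%VS by rewrite (L1.line_eq (vnz sE) sy) memv_line.
have sn := in_line sy yn.
have sz4 : s != z4 by apply: contraNneq ycz => <-.
have st1 : s != t1.
  apply/negP => /eqP es; rewrite es in ys.
  have : c *: v p \in <[v t1]>%VS.
    by rewrite (_ : c *: v p = y - v t1) ?rpredB ?memv_line // ey addrC addKr.
  move=> h; have : v p \in <[v t1]>%VS by rewrite -(scalerK c0 (v p)) memvZ.
  by move/(ptinj t1E pE) => ep; move: t1p; rewrite ep eqxx.
have sp : s != p.
  apply/negP => /eqP es; rewrite es in ys.
  have : v t1 \in <[v p]>%VS.
    by rewrite (_ : v t1 = y - c *: v p) ?rpredB ?rpredZ ?memv_line // ey addrK.
  by move/(ptinj pE t1E) => ep; move: t1p; rewrite ep eqxx.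
have sL : v s \notin L.
  apply/negP => sL; have := two_pts_eq dn dL z4E sE (neqS sz4) z4n sn z4L sL.
  by move=> en; move: t1L; rewrite -en t1n.
have sm : v s \notin m.
  apply/negP => smm; have := two_pts_eq dn dm t1E sE (neqS st1) t1n sn t1m smm.
  by move=> en; move: pm; rewrite -en pn.
have sU : v s \in U := subvP nU _ sn.
have kU : (Lw s <= U)%VS := LwU _ sU.
have dk := dim_Lw sE.
have kV : (Lw s <= V)%VS := subv_trans kU UV.
have [ya [yak yaL ya0]] := meet dU kU LU dk dL.
have [a aE ay] := full_pt fL yaL ya0.
have ak := in_line ay yak; have aL := in_line ay yaL.
have [yb [ybk ybm yb0]] := meet dU kU mU dk dm.
have [b bE bY] := full_pt fm ybm yb0.
have bk := in_line bY ybk; have bm := in_line bY ybm.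
have sa : s != a by apply: contraNneq sL => ->.
have sb : s != b by apply: contraNneq sm => ->.
have [eab|nab] := eqVneq a b; last first.
  exact: (no3w kV dk (w_Lw s) sE aE bE sa sb nab (g_Lw s) ak bk).
rewrite -eab in bm.
have az3 : a = z3.
  apply/eqP; apply: contraT => az3.
  have := two_pts_eq dL dm aE z3E az3 aL z3L bm z3m.
  by move=> eLm; move: t1L; rewrite eLm t1m.
rewrite az3 in ak.
have ek := eq_by2 dk (dim_Lw z3E) w0 (vg_nw z3E) (w_Lw s) ak (w_Lw z3) (g_Lw z3).
have pk : v p \in Lw s by rewrite ek.
have sz3 : s != z3 by apply: contraNneq sL => ->.
exact: (no3w kV dk (w_Lw s) sE z3E pE sz3 sp (neqS pz3) (g_Lw s) ak pk).
Qed.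

Lemma no3U L g1 g2 g3 : (L <= U)%VS -> \dim L = 2%N ->
  g1 \in E -> g2 \in E -> g3 \in E -> g1 != g2 -> g1 != g3 -> g2 != g3 ->
  v g1 \in L -> v g2 \in L -> v g3 \in L -> False.
Proof.
move=> LU dL e1 e2 e3 d12 d13 d23 l1 l2 l3.
have LV := subv_trans LU UV.
exact: (no_full LU dL (NG LV dL (three_pts e1 e2 e3 d12 d13 d23 l1 l2 l3))).
Qed.

Lemma card_sp_nz W : #|[set y | y \in W] :\ 0| = (#|F| ^ \dim W - 1)%N.
Proof.
have h0 : (0 : 'rV[F]_n) \in [set y | y \in W] by rewrite inE mem0v.
by rewrite -card_sp (cardsD1 0 [set y | y \in W]) h0 add1n subn1.
Qed.

Lemma cardA e (l0 : {vspace 'rV[F]_n}) : e \in E -> v e \in U -> (l0 <= U)%VS ->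
  \dim l0 = 2%N -> v e \notin l0 -> #|pts U| = (#|F| + 2)%N.
Proof.
move=> eE eU l0U dl0 el0.
set J := pts U :\ e.
set D := fun g => [set y | y \in (line v e g :&: l0)%VS] :\ 0.
have ye y : y \in l0 -> y != 0 -> y \notin <[v e]>%VS.
  move=> yl y0; apply: contra el0 => ye; apply: (in_line _ yl); by rewrite (L1.line_eq y0 ye) memv_line.
have JE g : g \in J -> (g \in E :\ e) && (v g \in U).
  by rewrite !inE => /andP [-> /andP [-> ->]].
have UD : \bigcup_(g in J) D g = [set y | y \in l0] :\ 0.
  apply/setP => y; apply/bigcupP/idP => [[g gJ]|].
    by rewrite !inE memv_cap => /andP [-> /andP [_ ->]].
  rewrite !inE => /andP [y0 yl].
  have dL : \dim (<[v e]> + <[y]>)%VS = 2%N.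
    by rewrite addvC dim_add_line ?ye // dim_vline (v_nz Mrep Msimple eE).
  have LU : (<[v e]> + <[y]> <= U)%VS by apply: line_in_U => //; apply: (subvP l0U).
  have [g gE /andP [ge gL]] := H eE (subv_trans LU UV) dL (subvP (addvSl _ _) _ (memv_line _)).
  have gE' : g \in E :\ e by rewrite !inE ge gE.
  have gJ : g \in J by rewrite !inE ge gE (subvP LU).
  exists g => //; rewrite !inE y0 memv_cap yl andbT /=.
  have -> : line v e g = (<[v e]> + <[y]>)%VS.
    apply: sub_eq; first by apply: line_sub => //; apply: (subvP (addvSl _ _)); rewrite memv_line.
    by rewrite dL (dim_line' Mrep Msimple eE gE').
  by apply: (subvP (addvSr _ _)); rewrite memv_line.
have cD g : g \in J -> #|D g| = (#|F| - 1)%N.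
  move=> gJ; case/andP: (JE g gJ) => gE' gU.
  rewrite /D card_sp_nz; suff -> : \dim (line v e g :&: l0) = 1%N by rewrite expn1.
  have dl := dim_line' Mrep Msimple eE gE'.
  have := dimv_sum_cap (line v e g) l0; rewrite dl dl0.
  have : (\dim (line v e g + l0) <= 3)%N.
    by rewrite -dU; apply: dimvS; rewrite subv_add l0U andbT; apply: line_sub.
  have : (3 <= \dim (line v e g + l0))%N.
    have <- : \dim (<[v e]> + l0) = 3%N by rewrite dim_add_line // dl0.
    by apply: dimvS; rewrite subv_add addvSr andbT; apply: (subv_trans _ (addvSl _ _)); rewrite -memvE ve_line.
  move=> h1 h2; have -> : \dim (line v e g + l0) = 3%N by apply/eqP; rewrite eqn_leq h1 h2.
  by move=> /eqP; rewrite (_ : (2 + 2 = 3 + 1)%N) // eqn_add2l => /eqP.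
have dis : {in J &, forall g h, g != h -> [disjoint D g & D h]}.
  move=> g h gJ hJ gh; apply: disjP => y; rewrite !inE !memv_cap.
  move=> /andP [y0 /andP [yg yl]] /andP [_ /andP [yh _]].
  case/andP: (JE g gJ) => gE' gU; case/andP: (JE h hJ) => hE' hU.
  have yne := ye y yl y0.
  have eg := line2 Mrep Msimple eE (dim_line' Mrep Msimple eE gE') (ve_line v e g) yg yne.
  have eh := line2 Mrep Msimple eE (dim_line' Mrep Msimple eE hE') (ve_line v e h) yh yne.
  move: gE' hE'; rewrite !inE => /andP [ge gE] /andP [he hE].
  apply: (no3U (L := line v e g) _ _ eE gE hE (neqS ge) (neqS he) gh (ve_line v e g) (mem_linef v e g)).
  - by apply: line_sub.
  - by apply: dim_line.
  - by rewrite eg -eh mem_linef.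
have := card_fam dis cD; rewrite UD card_sp_nz dl0.
have cJ : #|pts U| = #|J|.+1 by rewrite (cardsD1 e) inE eE eU.
rewrite cJ => h.
move: h q3; rewrite -mulnn; move: #|J| #|F| => a b; nia.
Qed.

Lemma indepA (X : {set T}) : X \subset pts U -> indep M X = (#|X| <= 3)%N.
Proof.
move=> XA; have XE : X \subset E := subset_trans XA (pts_sub v M U).
have XU : (vs X <= U)%VS := subv_trans (vsS v XA) (vs_pts v M U).
apply/idP/idP.
  rewrite (indepE Mrep) XE /= => /eqP <-; rewrite -dU; exact: dimvS.
rewrite leq_eqVlt ltnS => /orP [/eqP c3|c2]; last exact: (indep_le2 Mrep Msimple XE c2).
have [a aX] : exists a, a \in X by apply/set0Pn; rewrite -card_gt0 c3.
have : #|X :\ a| == 2%N by move: c3; rewrite (cardsD1 a) aX add1n => -[->].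
case/cards2P => b [c [bc eX]].
have eX' : X = a |: (b |: [set c]) by rewrite -eX setD1K.
have bX : b \in X by rewrite eX' !inE eqxx orbT.
have cX : c \in X by rewrite eX' !inE eqxx !orbT.
have bXa : b \in X :\ a by rewrite eX !inE eqxx.
have cXa : c \in X :\ a by rewrite eX !inE eqxx orbT.
have ab : a != b by move: bXa; rewrite !inE eq_sym => /andP [].
have ac : a != c by move: cXa; rewrite !inE eq_sym => /andP [].
have aE := subsetP XE _ aX; have bE := subsetP XE _ bX; have cE := subsetP XE _ cX.
have aU := subvP XU _ (vs_mem v aX); have bU := subvP XU _ (vs_mem v bX); have cU := subvP XU _ (vs_mem v cX).
rewrite (indepE Mrep) XE /= c3 eX' !vsU !vs1.
set L := (<[v b]> + <[v c]>)%VS.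
have dL : \dim L = 2%N by apply: dim_pair.
case: (boolP (v a \in L)) => aL.
  exfalso; apply: (no3U (L := L) _ dL aE bE cE ab ac bc aL) => //.
  - by apply: line_in_U.
  - by apply: (subvP (addvSl _ _)); rewrite memv_line.
  - by apply: (subvP (addvSr _ _)); rewrite memv_line.
by rewrite dim_add_line // dL.
Qed.

End Geom.

End L7.
Import L7.


Theorem lemma3p4 (q : nat) (T : finType) (M : matroid T) (r : nat) :
  prime_power q -> 2 < q ->
  simple M -> representable q M ->
  mrank M (ground M) = r -> 3 <= r ->
  ~ isPG M (r - 1) q ->
  (forall e, e \in ground M ->
     forall N, is_si (contract M [set e]) N -> isPG N (r - 2) q) ->
  (exists2 k, 3 <= k <= q & has_induced_minor M (U 2 k)) \/
  has_induced_minor M (U 3 (q + 2)).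
Proof.
move=> _ q2 Ms [F [n [v [cF Mrep]]]] rk r3 notPG hyp.
set E := ground M.
have dE : \dim (vs v E) = r by rewrite -rk (mrank_sub Mrep) // subxx.
have q3 : 2 < #|F| by rewrite cF.
case: (pickP [pred x | (x \in vs v E) && (x != 0%R) &&
                       [forall g, (g \in E) ==> (x \notin <[v g]>%VS)]]) => [w|none]; last first.
  exfalso; apply: notPG; exists F; split => //.
  have -> : (r - 1).+1 = \dim (vs v E) by rewrite dE; lia.
  apply: (full_miso Mrep Ms) => x xV x0.
  move: (none x) => /=; rewrite xV x0 /= => /negbT /forallPn [g].
  by rewrite negb_imply negbK => /andP [gE xg]; exists g.
move=> /= /andP [/andP [wV w0] /forallP wm].
have wmiss : forall g, g \in E -> w \notin <[v g]>%VS by move=> g gE; move: (wm g); rewrite gE.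
have r2 : 2 < r by [].
have H : forall g L, g \in E -> (L <= vs v E)%VS -> \dim L = 2 -> v g \in L ->
    exists2 h, h \in E & (h != g) && (v h \in L).
  by move=> g L gE LV dL gL; exact: (H_line Mrep Ms gE cF dE r2 (hyp g gE) LV dL gL).
case: (classic (exists L : {vspace 'rV[F]_n}, [/\ (L <= vs v E)%VS, \dim L = 2,
          3 <= #|pts v M L| & ~ full v M L])) => [[L [LV dL c3 nf]]|nex].
  left; exists #|pts v M L|.
    rewrite c3 /=.
    case: (pickP [pred y | (y \in L) && (y != 0%R) &&
              [forall g, (g \in E) ==> (y \notin <[v g]>%VS)]]) => [y|none]; last first.
      exfalso; apply: nf => z zL z0; move: (none z) => /=; rewrite zL z0 /=.
      by move=> /negbT /forallPn [g]; rewrite negb_imply negbK => /andP [gE zg]; exists g.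
    move=> /= /andP [/andP [yL y0] /forallP ym].
    set D := fun g => [set z | z \in <[v g]>%VS] :\ 0%R.
    set Z := ([set z | z \in L] :\ 0%R) :\ y.
    have := @disj_card_le _ _ (pts v M L) D (#|F| - 1) Z.
    have cZ : #|Z| = (#|F| ^ 2 - 1 - 1)%N.
      rewrite -dL -card_sp_nz /Z; have := cardsD1 y ([set z | z \in L] :\ 0%R).
      by rewrite !inE yL y0 add1n => ->; rewrite subn1.
    rewrite cZ cF -mulnn; move=> h.
    have {}h := h _ _ _.
    suff : #|pts v M L| * (q - 1) <= q * q - 1 - 1 by move: q2; clear; nia.
    apply: h.
    - move=> g h gJ hJ gh; apply: disjP => z; rewrite !inE => /andP [z0 zg] /andP [_ zh].
      have gE : g \in E by move: gJ; rewrite inE => /andP [].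
      have hE : h \in E by move: hJ; rewrite inE => /andP [].
      have := L1.line_eq z0 zg; rewrite (L1.line_eq z0 zh) => ehg.
      have : v h \in <[v g]>%VS by rewrite -ehg memv_line.
      by move/(pt_inj Mrep Ms gE hE) => ehg'; move: gh; rewrite ehg' eqxx.
    - move=> g; rewrite inE => /andP [gE gL].
      by rewrite /D card_sp_nz dim_vline (v_nz Mrep Ms gE) expn1 cF.
    - move=> g; rewrite inE => /andP [gE gL]; apply/subsetP => z; rewrite !inE => /andP [z0 zg].
      rewrite z0 (in_line zg gL) andbT /=.
      have yg : y \notin <[v g]>%VS by move: (ym g); rewrite gE.
      by rewrite andbT; apply: contraNneq yg => <-.
  have [x0 x0L] : exists x0, x0 \in pts v M L by apply/set0Pn; rewrite -card_gt0 (ltn_trans _ c3).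
  apply: (minor_restr (flat_pts Mrep L)).
  apply: (uniform_miso x0L (pts_sub v M L)) => X XL.
  apply/idP/idP => [|c2]; last exact: (indep_le2 Mrep Ms (subset_trans XL (pts_sub v M L)) c2).
  rewrite (indepE Mrep) => /andP [_ /eqP <-]; rewrite -dL; apply: dimvS.
  exact: (subv_trans (vsS v XL) (vs_pts v M L)).
have NG : forall L, (L <= vs v E)%VS -> \dim L = 2 -> 3 <= #|pts v M L| -> full v M L.
  by move=> L LV dL c3; apply: NNPP => nf; apply: nex; exists L; split.
have [e eE] : exists e, e \in E.
  apply/set0Pn; apply: contraTneq r3 => E0.
  by rewrite -dE E0 vs0 dimv0.
have we : w \notin <[v e]>%VS := wmiss e eE.
have ve0 := v_nz Mrep Ms eE.
set W2 := (<[v e]> + <[w]>)%VS.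
have dW2 : \dim W2 = 2 by rewrite /W2 addvC dim_add_line // dim_vline ve0.
have hd : \dim W2 < \dim (vs v E) by rewrite dW2 dE.
have [u uV uW2] := exists_out hd.
set W3 := (<[u]> + W2)%VS.
have dW3 : \dim W3 = 3 by rewrite /W3 dim_add_line // dW2.
have eV : v e \in vs v E by apply: vs_mem.
have W3V : (W3 <= vs v E)%VS by rewrite /W3 /W2 !subv_add -!memvE uV eV wV.
have wW3 : w \in W3.
  by apply: (subvP (addvSr _ _)); apply: (subvP (addvSr _ _)); rewrite memv_line.
have eW3 : v e \in W3.
  by apply: (subvP (addvSr _ _)); apply: (subvP (addvSl _ _)); rewrite memv_line.
have uW3 : u \in W3 by apply: (subvP (addvSl _ _)); rewrite memv_line.
set l0 := (<[w]> + <[u]>)%VS.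
have uw : u \notin <[w]>%VS.
  apply: contra uW2 => uw; apply: (subvP _ _ uw); rewrite -memvE.
  by apply: (subvP (addvSr _ _)); rewrite memv_line.
have dl0 : \dim l0 = 2 by rewrite /l0 addvC dim_add_line // dim_vline w0.
have l0W3 : (l0 <= W3)%VS by rewrite /l0 subv_add -!memvE wW3 uW3.
have el0 : v e \notin l0.
  apply/negP => el; have : (W3 <= l0)%VS.
    rewrite /W3 /W2 !subv_add -!memvE el.
    by rewrite /l0 (subvP (addvSl _ _) _ (memv_line _)) (subvP (addvSr _ _) _ (memv_line _)).
  by move/dimvS; rewrite dW3 dl0.
right.
have cA := cardA Mrep Ms wV w0 wmiss H NG q3 W3V dW3 wW3 eE eW3 l0W3 dl0 el0.
rewrite -cF -cA; apply: (minor_restr (flat_pts Mrep W3)).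
have eA : e \in pts v M W3 by rewrite inE eE eW3.
apply: (uniform_miso eA (pts_sub v M W3)) => X XA.
exact: (indepA Mrep Ms wV w0 wmiss H NG q3 W3V dW3 wW3 XA).
Qed.
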